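(* For every response $y$, $$\bar\pi_n(y|x)=\frac{n\,\pi_{\mathrm{gen}}(y|x)\,\phi_\beta(y|x)}{1-e^{-n}}\int_0^\infty e^{n(\Phi_\beta(s)-1)}\,e^{-s\phi_\beta(y|x)}\,ds.$$
   Context: Fix a prompt $x$, a countable response space $\mathcal{Y}$, conditional distributions $\pi_{\mathrm{target}}$ and $\pi_{\mathrm{gen}}$ (full support), a reward $r$, and $\beta>0$. Let $\phi_\beta(y|x)=\frac{\pi_{\mathrm{target}}(y|x)}{\pi_{\mathrm{gen}}(y|x)}e^{\beta r(y|x)}$ and $\Phi_\beta(s)=\mathbb{E}_{Y\sim\pi_{\mathrm{gen}}(\cdot|x)}[e^{-s\phi_\beta(Y|x)}]$ for $s\ge0$. Let $N\sim\mathrm{Poi}(n)|_{>0}$ (Poisson with mean $n$ conditioned to be positive) and, given $N$, let $Y_1,\dots,Y_N$ be i.i.d. from $\pi_{\mathrm{gen}}(\cdot|x)$; $N_y$ is the number of $j$ with $Y_j=y$ and $Z=\sum_{j=1}^N\phi_\beta(Y_j|x)$. Define $\hat\pi_N(y|x)=\mathbb{E}[N_y\phi_\beta(y|x)/Z\mid N]$ (the output distribution of sequential Monte Carlo with $N$ particles) and $\bar\pi_n(y|x)=\mathbb{E}_{N}[\hat\pi_N(y|x)]$. *)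

(* Defs.v *)
From HB Require Import structures.
From mathcomp Require Import all_boot all_order all_algebra.
From mathcomp Require Import all_classical all_reals all_analysis.
Set Implicit Arguments. Unset Strict Implicit. Unset Printing Implicit Defensive.
Import Order.TTheory GRing.Theory Num.Theory.
Local Open Scope classical_set_scope.
Local Open Scope ring_scope.

(* The prompt x is fixed and suppressed: pi_gen, pi_target, r are functions of y
   only.  Y is a countable response space (countType). *)

Definition phi_beta {R : realType} {Y : countType}
  (pi_target pi_gen r : Y -> R) (beta : R) (y : Y) : R :=
  pi_target y / pi_gen y * expR (beta * r y).

(* Phi_beta(s) = E_{Y ~ pi_gen}[exp(-s phi_beta(Y))]; the sum is in [0,1] when
   pi_gen is a distribution, so taking its real part (fine) loses nothing. *)
Definition Phi_beta {R : realType} {Y : countType}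
  (pi_target pi_gen r : Y -> R) (beta : R) (s : R) : R :=
  fine (\esum_(y in [set: Y]) (pi_gen y * expR (- (s * phi_beta pi_target pi_gen r beta y)))%:E).

(* pihat_k(y) = E[N_y phi(y) / Z | N = k], with Y_1..Y_k iid pi_gen, written
   out as the sum over all k-tuples of responses weighted by their probability. *)
Definition smc_output {R : realType} {Y : countType}
  (pi_target pi_gen r : Y -> R) (beta : R) (k : nat) (y : Y) : \bar R :=
  \esum_(ys in [set: k.-tuple Y])
    ((\prod_(j < k) pi_gen (tnth ys j)) *
     ((count_mem y ys)%:R * phi_beta pi_target pi_gen r beta y /
      (\sum_(j < k) phi_beta pi_target pi_gen r beta (tnth ys j))))%:E.

Definition poisson_pos_pmf {R : realType} (n : R) (k : nat) : R :=
  expR (- n) * n ^+ k / (k`!)%:R / (1 - expR (- n)).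

Definition smc_avg_output {R : realType} {Y : countType}
  (pi_target pi_gen r : Y -> R) (beta : R) (n : R) (y : Y) : \bar R :=
  \esum_(k in [set k : nat | (0 < k)%N])
    ((poisson_pos_pmf n k)%:E * smc_output pi_target pi_gen r beta k y)%E.

(* Main.v *)
Require Import Defs.
From HB Require Import structures.
From mathcomp Require Import all_boot all_order all_algebra.
From mathcomp Require Import all_classical all_reals all_analysis.
From mathcomp Require Import measurable_realfun.
From mathcomp Require Import ring lra.
Import Order.TTheory GRing.Theory Num.Theory.
Local Open Scope classical_set_scope.
Local Open Scope ring_scope.

Section part1.
Local Open Scope ereal_scope.

Definition pk {R : realType} {I : countType} (a : I -> \bar R) (n : nat) : \bar R :=
  if @pickle_inv I n is Some x then a x else 0.

Lemma esum_pickle {R : realType} {I : countType} (a : I -> \bar R) :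
  (forall i, 0 <= a i) ->
  \esum_(i in [set: I]) a i = \sum_(n <oo) pk a n.
Proof.
move=> a0.
have pk0 n : 0 <= pk a n by rewrite /pk; case: pickle_inv.
rewrite nneseries_esumT //.
rewrite [RHS](_ : _ = \esum_(n in [set: nat]) if n \in range (@pickle I) then pk a n else 0); last first.
  apply: eq_esum => n _; case: ifPn => // /negP nr.
  rewrite /pk; case E: pickle_inv => [x|] //; exfalso; apply: nr.
  by rewrite inE; exists x => //; rewrite -(@pickle_invK I n) E.
rewrite -esum_mkcondr setTI esum_image; last by move=> x y _ _; apply: (pcan_inj (@pickleK I)).
by apply: eq_esum => x _; rewrite /pk pickleK_inv.
Qed.

Lemma esumZl_count {R : realType} {I : countType} (c : R) (a : I -> \bar R) :
  (forall i, 0 <= a i) -> (0 <= c)%R ->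
  \esum_(i in [set: I]) (c%:E * a i) = c%:E * \esum_(i in [set: I]) a i.
Proof.
move=> a0 c0; rewrite !esum_pickle //; last by move=> i; rewrite mule_ge0.
rewrite -nneseriesZl; last by move=> n _; rewrite /pk; case: pickle_inv.
by apply: congr_lim; apply/funext => N; apply: eq_bigr => n _; rewrite /pk; case: pickle_inv => //=; rewrite mule0.
Qed.

End part1.

Section part2.
Local Open Scope ereal_scope.
Section ie.
Context {R : realType} {I : countType} (D : set R) (mD : measurable D)
  (f : I -> R -> \bar R)
  (mf : forall i, measurable_fun D (f i)) (f0 : forall i x, D x -> 0 <= f i x).

Let g n x := pk (fun i => f i x) n.

Let mg n : measurable_fun D (g n).
Proof. by rewrite /g /pk; case: pickle_inv => [i|]; [exact: mf|exact: measurable_cst]. Qed.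

Let g0 n x : D x -> 0 <= g n x.
Proof. by move=> Dx; rewrite /g /pk; case: pickle_inv => [i|] //; exact: f0. Qed.

Let eqg x : D x -> \esum_(i in [set: I]) f i x = \sum_(n <oo) g n x.
Proof. by move=> Dx; rewrite esum_pickle // => i; exact: f0. Qed.

Lemma measurable_esum : measurable_fun D (fun x => \esum_(i in [set: I]) f i x).
Proof.
apply: (eq_measurable_fun (fun x => \sum_(n <oo | n \in xpredT) g n x)).
  by move=> x /set_mem Dx; rewrite eqg.
by apply: ge0_emeasurable_sum => // k x Dx _; exact: g0.
Qed.

Lemma integral_esum : \int[lebesgue_measure]_(x in D) (\esum_(i in [set: I]) f i x) =
  \esum_(i in [set: I]) \int[lebesgue_measure]_(x in D) f i x.
Proof.
transitivity (\int[lebesgue_measure]_(x in D) \sum_(n <oo) g n x).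
  by apply: eq_integral => x /set_mem Dx; rewrite eqg.
rewrite integral_nneseries; try by [move=> n x Dx; exact: g0 | exact: mg | exact: mD].
rewrite esum_pickle; try by move=> i; apply: integral_ge0 => x Dx; exact: f0.
apply: congr_lim; apply/funext => N; apply: eq_bigr => n _.
by rewrite /g /pk; case: pickle_inv => [i|] //; rewrite integral0.
Qed.
End ie.

End part2.

Section part3.
Local Open Scope ereal_scope.

Lemma esum_tuple_prod {R : realType} {T : countType} (k : nat)
  (f : 'I_k -> T -> R) (c : 'I_k -> R) :
  (forall i x, (0 <= f i x)%R) ->
  (forall i, \esum_(x in [set: T]) (f i x)%:E = (c i)%:E) ->
  \esum_(ys in [set: k.-tuple T]) (\prod_(i < k) f i (tnth ys i))%:E =
  (\prod_(i < k) c i)%:E.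
Proof.
elim: k f c => [|k IH] f c f0 fc.
  rewrite big_ord0 (_ : [set: 0.-tuple T] = [set [tuple]]); last first.
    by apply/seteqP; split => t //= _; rewrite (tuple0 t).
  by rewrite esum_set1 ?big_ord0 // lee_fin.
rewrite (reindex_esum [set: T * k.-tuple T] _ (fun p => [tuple of p.1 :: p.2])); last first.
  rewrite setTT_bijective; apply: (@Bijective _ _ _ (fun t => (thead t, behead_tuple t))).
    by move=> [x t]; congr pair => //; apply: val_inj.
  by move=> t /=; rewrite -tuple_eta.
rewrite (_ : [set: T * k.-tuple T] = [set: T] `*`` (fun _ => [set: k.-tuple T])); last first.
  by apply/seteqP; split.
rewrite -(@esum_esum _ _ _ _ _ (fun (x : T) (t : k.-tuple T) => (\prod_(i < k.+1) f i (tnth [tuple of x :: t] i))%:E)); last first.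
  by move=> x t _ _; rewrite lee_fin prodr_ge0.
under eq_esum => x _.
  under eq_esum => t _ do rewrite big_ord_recl tnth0 EFinM.
  rewrite esumZl_count; last 2 first.
  - by move=> t; rewrite lee_fin prodr_ge0.
  - exact: f0.
  under eq_esum => t _ do (under eq_bigr => i _ do rewrite tnthS).
  rewrite (IH (fun i => f (lift ord0 i)) (fun i => c (lift ord0 i))) //.
  rewrite muleC.
  over.
rewrite /= esumZl_count; last 2 first.
- by move=> x; rewrite lee_fin.
- by apply: prodr_ge0 => i _; rewrite -lee_fin -(fc (lift ord0 i)) esum_ge0 // => x _; rewrite lee_fin.
by rewrite fc -EFinM big_ord_recl mulrC.
Qed.

End part3.

Section part4.
Local Open Scope ereal_scope.

Lemma mexp {R : realType} (D : set R) (c Z : R) :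
  measurable_fun D (fun s : R => (c * expR (- (s * Z)))%:E).
Proof.
apply/measurable_EFinP; apply: measurable_funM => //.
apply: measurableT_comp; first exact: measurable_expR.
by apply: measurable_funN; apply: measurable_funM.
Qed.

Lemma mexp1 {R : realType} (D : set R) (Z : R) :
  measurable_fun D (fun s : R => (expR (- (s * Z)))%:E).
Proof.
apply/measurable_EFinP.
apply: measurableT_comp; first exact: measurable_expR.
by apply: measurable_funN; apply: measurable_funM.
Qed.

Lemma intZ {R : realType} (c Z : R) : (0 <= c)%R ->
  \int[lebesgue_measure]_(s in `[0%R, +oo[%classic) (c * expR (- (s * Z)))%:E =
  c%:E * \int[lebesgue_measure]_(s in `[0%R, +oo[%classic) (expR (- (s * Z)))%:E.
Proof.
move=> c0; under eq_integral do rewrite EFinM.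
apply: ge0_integralZl_EFin => //.
- exact: mexp1.
Qed.

Lemma integral_expZ {R : realType} (Z : R) : (0 < Z)%R ->
  \int[lebesgue_measure]_(s in `[0%R, +oo[%classic) (expR (- (s * Z)))%:E = (Z^-1)%:E.
Proof.
move=> Z0.
have h : \int[lebesgue_measure]_(s in `[0%R, +oo[%classic) (Z * expR (- (s * Z)))%:E = 1.
  rewrite -(integral_exponential_pdf Z0) integral_mkcond; apply: eq_integral => x _.
  rewrite /restrict /exponential_pdf /patch; case: ifPn => _ //.
  by rewrite mulNr (mulrC Z x).
move: h; rewrite intZ ?ltW // => h.
have : (Z^-1)%:E * ((Z%:E) * \int[lebesgue_measure]_(s in `[0%R, +oo[%classic) (expR (- (s * Z)))%:E) = (Z^-1)%:E.
  by rewrite h mule1.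
by rewrite muleA -EFinM mulVf ?gt_eqF // mul1e.
Qed.

Lemma integral_cexpZ {R : realType} (c Z : R) : (0 <= c)%R -> (c != 0%R -> 0 < Z)%R ->
  \int[lebesgue_measure]_(s in `[0%R, +oo[%classic) (c * expR (- (s * Z)))%:E = (c / Z)%:E.
Proof.
move=> c0 cZ; have [->|cn0] := eqVneq c 0%R.
  by rewrite mul0r; under eq_integral do rewrite mul0r; rewrite integral0.
by rewrite intZ // integral_expZ ?cZ // -EFinM.
Qed.

End part4.

Section part5.
Local Open Scope ereal_scope.
Lemma esum_exp {R : realType} (x : R) : (0 <= x)%R ->
  \esum_(m in [set: nat]) (x ^+ m / (m`!)%:R)%:E = (expR x)%:E.
Proof.
move=> x0; rewrite -nneseries_esumT; last by move=> m; rewrite lee_fin divr_ge0 // exprn_ge0.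
rewrite expRE -EFin_lim; last first.
  rewrite /pseries/=; under eq_fun do rewrite mulrC.
  exact: is_cvg_series_exp_coeff.
apply/congr_lim/funext => N /=; rewrite /pseries/= /series/= -sumEFin//.
by apply: eq_bigr => m _; rewrite /exp_coeff mulrC.
Qed.

End part5.

Section part6.
Local Open Scope ereal_scope.

Lemma count_tnth (T : eqType) k (ys : k.-tuple T) y :
  count_mem y ys = (\sum_(j < k) (tnth ys j == y))%N.
Proof.
rewrite -sum1_count big_mkcond /= big_tuple; apply: eq_bigr => j _.
by case: eqP.
Qed.

Section step2.
Context {R : realType} {T : countType} (p phi : T -> R)
  (p0 : forall x, (0 < p x)%R) (phi0 : forall x, (0 <= phi x)%R)
  (p1 : \esum_(x in [set: T]) (p x)%:E = 1).

Definition Phi (s : R) : R := fine (\esum_(x in [set: T]) (p x * expR (- (s * phi x)))%:E).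

Lemma esum_q s : (0 <= s)%R ->
  \esum_(x in [set: T]) (p x * expR (- (s * phi x)))%:E = (Phi s)%:E.
Proof.
move=> s0; rewrite /Phi fineK //; apply/fin_numPlt/andP; split.
  by apply: (@lt_le_trans _ _ 0) => //; apply: esum_ge0 => x _; rewrite lee_fin mulr_ge0 ?expR_ge0 ?ltW.
apply: (@le_lt_trans _ _ 1); last by rewrite ltry.
rewrite -p1; apply: le_esum => x _; rewrite lee_fin; apply: ler_piMr; first exact: ltW.
by rewrite expR_le1 oppr_le0 mulr_ge0.
Qed.

Lemma step2 s k y : (0 <= s)%R ->
  \esum_(ys in [set: k.-tuple T])
     ((\prod_(j < k) p (tnth ys j)) * (count_mem y ys)%:R * phi y *
      expR (- (s * \sum_(j < k) phi (tnth ys j))))%:E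
  = (k%:R * (p y * expR (- (s * phi y))) * phi y * Phi s ^+ k.-1)%:E.
Proof.
move=> s0.
pose q x := (p x * expR (- (s * phi x)))%R.
pose g (j i : 'I_k) x := (q x * (if i == j then (x == y)%:R else 1))%R.
have q0 x : (0 <= q x)%R by rewrite mulr_ge0 ?expR_ge0 ?ltW.
have g0 j i x : (0 <= g j i x)%R by rewrite /g mulr_ge0 //; case: (i == j) => //; case: (x == y).
have eq1 (ys : k.-tuple T) :
  ((\prod_(j < k) p (tnth ys j)) * (count_mem y ys)%:R * phi y *
      expR (- (s * \sum_(j < k) phi (tnth ys j))))%:E =
  \sum_(j < k) (phi y)%:E * (\prod_(i < k) g j i (tnth ys i))%:E.
  rewrite sumEFin; congr EFin.
  rewrite count_tnth natr_sum mulr_sumr mulr_suml mulr_suml; apply: eq_bigr => j _.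
  rewrite /g big_split /= -big_mkcond /= big_pred1_eq.
  have -> : (- (s * \sum_(j0 < k) phi (tnth ys j0)) = \sum_(j0 < k) - (s * phi (tnth ys j0)))%R.
    by rewrite mulr_sumr -sumrN.
  rewrite expR_sum /q big_split /=.
  ring.
under eq_esum do rewrite eq1.
rewrite esum_sum; last by move=> ys j _ _; rewrite -EFinM lee_fin mulr_ge0 // prodr_ge0.
have hg j i : \esum_(x in [set: T]) (g j i x)%:E = (if i == j then q y else Phi s)%:E.
  rewrite /g; case: (i == j).
    rewrite (_ : (fun x => _) = fun x => if x \in [set y] then (q x)%:E else 0); last first.
      apply/funext => x; case: (x =P y) => [->|xy]; first by rewrite mem_set // mulr1.
      by rewrite memNset // mulr0.
    by rewrite -esum_mkcond esum_set1 // lee_fin.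
  under eq_esum do rewrite mulr1.
  exact: esum_q.
under eq_bigr => j _.
  rewrite esumZl_count; try by [move=> ys; rewrite lee_fin prodr_ge0 | exact: phi0].
  rewrite (@esum_tuple_prod _ _ _ _ (fun i => if i == j then q y else Phi s)) //.
  rewrite (bigD1 j) //= eqxx.
  under eq_bigr => i /negPf -> do [].
  rewrite prodr_const cardC1 card_ord -EFinM.
  over.
rewrite sumEFin sumr_const card_ord; congr EFin.
rewrite -mulr_natl /q; ring.
Qed.
End step2.

End part6.

Section part7.
Local Open Scope ereal_scope.

Lemma step1 {R : realType} {Y : countType} (pi_target pi_gen r : Y -> R) (beta : R)
  (Htgt0 : forall y, (0 <= pi_target y)%R) (Hgen0 : forall y, (0 < pi_gen y)%R) k y :
  let phi := phi_beta pi_target pi_gen r beta in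
  smc_output pi_target pi_gen r beta k y =
  \int[lebesgue_measure]_(s in `[0%R, +oo[%classic)
    (\esum_(ys in [set: k.-tuple Y])
     ((\prod_(j < k) pi_gen (tnth ys j)) * (count_mem y ys)%:R * phi y *
      expR (- (s * \sum_(j < k) phi (tnth ys j))))%:E).
Proof.
move=> phi.
have phi0 x : (0 <= phi x)%R.
  by rewrite /phi /phi_beta mulr_ge0 ?expR_ge0 // divr_ge0 // ltW.
rewrite integral_esum //; last 2 first.
- by move=> ys; apply: mexp.
- move=> ys s _; rewrite lee_fin; apply: mulr_ge0; last exact: expR_ge0.
  apply: mulr_ge0 => //; apply: mulr_ge0 => //; apply: prodr_ge0 => j _; exact: ltW.
rewrite /smc_output; congr esum; apply/funext => ys.
rewrite integral_cexpZ; last 2 first.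
- apply: mulr_ge0 => //; apply: mulr_ge0 => //; apply: prodr_ge0 => j _; exact: ltW.
- move=> c0.
  have cn0 : (count_mem y ys)%:R != 0%R :> R by apply: contraNneq c0 => ->; rewrite mulr0 mul0r.
  have pn0 : phi y != 0%R by apply: contraNneq c0 => ->; rewrite mulr0.
  have : y \in ys.
    by rewrite -has_pred1 has_count lt0n -(pnatr_eq0 R).
  case/tnthP => j yj.
  rewrite (bigD1 j) //= -yj.
  have h1 : (0 < phi y)%R by rewrite lt_def pn0 phi0.
  have h2 : (0 <= \sum_(i < k | i != j) phi (tnth ys i))%R by apply: sumr_ge0.
  lra.
by rewrite !mulrA.
Qed.

End part7.

Section part8.
Local Open Scope ereal_scope.

Lemma step3 {R : realType} (n A Ph : R) : (0 < n)%R -> (0 <= A)%R -> (0 <= Ph)%R ->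
  \esum_(k in [set: nat]) (if k \in [set k : nat | (0 < k)%N] then
      (poisson_pos_pmf n k)%:E * (k%:R * A * Ph ^+ k.-1)%:E else 0)
  = ((n * A / (1 - expR (- n))) * expR (n * (Ph - 1)))%:E.
Proof.
move=> n0 A0 Ph0.
have en1 : (expR (- n) < 1)%R by rewrite expR_lt1 oppr_lt0.
have d0 : (1 - expR (- n) != 0)%R by rewrite subr_eq0 eq_sym lt_eqF.
have d1 : (0 < 1 - expR (- n))%R by rewrite subr_gt0.
rewrite -esum_mkcond.
rewrite (reindex_esum [set: nat] _ succn); last first.
  split => //.
  - by move=> a b _ _ [].
  - by move=> k /= k0; exists k.-1 => //; rewrite prednK.
under eq_esum => m _.
  rewrite -EFinM (_ : (poisson_pos_pmf n m.+1 * _ = (expR (- n) * n * A / (1 - expR (- n))) * ((n * Ph) ^+ m / (m`!)%:R))%R); last first.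
    rewrite /poisson_pos_pmf factS natrM exprS exprMn /=.
    field.
    have hm : (0 <= (m%:R : R))%R by apply: ler0n.
    have hf : (0 < (m`!%:R : R))%R by rewrite ltr0n fact_gt0.
    apply/and3P; split; [by rewrite gt_eqF | by [] | rewrite gt_eqF //; lra].
  over.
under eq_esum do rewrite EFinM.
have h1 m : 0 <= ((n * Ph) ^+ m / (m`!)%:R)%:E.
  rewrite lee_fin; apply: divr_ge0; last exact: ler0n.
  by apply: exprn_ge0; apply: mulr_ge0 => //; exact: ltW.
have h2 : (0 <= expR (- n) * n * A / (1 - expR (- n)))%R.
  apply: divr_ge0; last exact: ltW.
  by apply: mulr_ge0 => //; apply: mulr_ge0; [exact: expR_ge0 | exact: ltW].
have h3 : (0 <= n * Ph)%R by apply: mulr_ge0 => //; exact: ltW.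
rewrite esumZl_count // esum_exp // -EFinM; congr EFin.
rewrite mulrBr mulr1 expRD expRN.
field.
have e1 : (1 < expR n)%R by rewrite expR_gt1.
by rewrite gt_eqF ?expR_gt0 //= subr_eq0 gt_eqF.
Qed.

End part8.


Theorem lemmaD1 (R : realType) (Y : countType)
  (pi_target pi_gen r : Y -> R) (beta n : R)
  (Htgt0 : forall y, 0 <= pi_target y)
  (Htgt1 : (\esum_(y in [set: Y]) (pi_target y)%:E = 1)%E)
  (Hgen0 : forall y, 0 < pi_gen y)
  (Hgen1 : (\esum_(y in [set: Y]) (pi_gen y)%:E = 1)%E)
  (Hbeta : 0 < beta) (Hn : 0 < n) (y : Y) :
  smc_avg_output pi_target pi_gen r beta n y =
  ((n * pi_gen y * phi_beta pi_target pi_gen r beta y / (1 - expR (- n)))%:E *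
   \int[lebesgue_measure]_(s in `[0%R, +oo[%classic)
      (expR (n * (Phi_beta pi_target pi_gen r beta s - 1))
       * expR (- (s * phi_beta pi_target pi_gen r beta y)))%:E)%E.
Proof.
pose phi := phi_beta pi_target pi_gen r beta.
have phi0 x : 0 <= phi x.
  by rewrite /phi /phi_beta mulr_ge0 ?expR_ge0 // divr_ge0 // ltW.
pose D := `[0%R, +oo[%classic : set R.
have mD : measurable D by exact: measurable_itv.
pose H k s := (\esum_(ys in [set: k.-tuple Y])
     ((\prod_(j < k) pi_gen (tnth ys j)) * (count_mem y ys)%:R * phi y *
      expR (- (s * \sum_(j < k) phi (tnth ys j))))%:E)%E.
have mH k : measurable_fun D (H k).
  apply: measurable_esum => // [ys|ys s _]; first exact: mexp.
  rewrite lee_fin; apply: mulr_ge0; last exact: expR_ge0.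
  apply: mulr_ge0 => //; apply: mulr_ge0 => //; apply: prodr_ge0 => j _; exact: ltW.
have H0 k s : (0 <= H k s)%E.
  apply: esum_ge0 => ys _; rewrite lee_fin; apply: mulr_ge0; last exact: expR_ge0.
  apply: mulr_ge0 => //; apply: mulr_ge0 => //; apply: prodr_ge0 => j _; exact: ltW.
have S1 k : smc_output pi_target pi_gen r beta k y = (\int[lebesgue_measure]_(s in D) H k s)%E.
  exact: step1.
have pmf0 k : 0 <= poisson_pos_pmf n k.
  have en1 : (expR (- n) < 1)%R by rewrite expR_lt1 oppr_lt0.
  rewrite /poisson_pos_pmf; apply: divr_ge0; last by rewrite subr_ge0 ltW.
  apply: divr_ge0; last exact: ler0n.
  by apply: mulr_ge0; [exact: expR_ge0 | apply: exprn_ge0; exact: ltW].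
pose F k s := if k \in [set k : nat | (0 < k)%N] then ((poisson_pos_pmf n k)%:E * H k s)%E else 0%E.
have mF k : measurable_fun D (F k).
  rewrite /F; have [kin|kin] := boolP (k \in [set k : nat | (0 < k)%N]).
    exact: measurable_funeM.
  exact: measurable_cst.
have F0 k s : (0 <= F k s)%E.
  rewrite /F; case: ifPn => _ //; apply: mule_ge0 => //; by rewrite lee_fin.
transitivity (\esum_(k in [set: nat]) \int[lebesgue_measure]_(s in D) F k s)%E.
  rewrite /smc_avg_output esum_mkcond; apply: eq_esum => k _.
  rewrite /F; have [kin|kin] := boolP (k \in [set k : nat | (0 < k)%N]).
    rewrite S1; symmetry; apply: ge0_integralZl_EFin => //; by [move=> s _; exact: H0 | exact: mH | exact: pmf0].
  by rewrite integral0.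
rewrite -integral_esum //.
pose c := n * pi_gen y * phi y / (1 - expR (- n)).
pose g s := expR (n * (Phi pi_gen phi s - 1)) * expR (- (s * phi y)).
have en1 : (expR (- n) < 1)%R by rewrite expR_lt1 oppr_lt0.
have c0 : 0 <= c.
  rewrite /c; apply: divr_ge0; last by rewrite subr_ge0 ltW.
  by apply: mulr_ge0 => //; apply: mulr_ge0; apply: ltW.
have pw s : D s -> (\esum_(k in [set: nat]) F k s)%E = (c * g s)%:E.
  move=> Ds; have s0 : 0 <= s by move: Ds; rewrite /D /= in_itv /= andbT.
  have Ph0 : 0 <= Phi pi_gen phi s.
    by rewrite -lee_fin -(@esum_q R Y pi_gen phi Hgen0 phi0 Hgen1 s s0) esum_ge0 // => x _; rewrite lee_fin mulr_ge0 ?expR_ge0 // ltW.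
  have HE k : H k s = (k%:R * (pi_gen y * expR (- (s * phi y)) * phi y) * Phi pi_gen phi s ^+ k.-1)%:E.
    by rewrite /H (@step2 R Y pi_gen phi Hgen0 phi0 Hgen1) //; congr EFin; ring.
  transitivity (\esum_(k in [set: nat]) (if k \in [set k : nat | (0 < k)%N] then
      (poisson_pos_pmf n k)%:E * (k%:R * (pi_gen y * expR (- (s * phi y)) * phi y) * Phi pi_gen phi s ^+ k.-1)%:E else 0))%E.
    by apply: eq_esum => k _; rewrite /F HE.
  rewrite step3 //; last by apply: mulr_ge0; [apply: mulr_ge0; [apply: ltW | exact: expR_ge0] | exact: phi0].
  by congr EFin; rewrite /c /g; ring.
transitivity (\int[lebesgue_measure]_(s in D) (c * g s)%:E)%E.
  by apply: eq_integral => s /set_mem Ds; rewrite pw.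
change ((\int[lebesgue_measure]_(s in D) (c * g s)%:E)%E = (c%:E * \int[lebesgue_measure]_(s in D) (g s)%:E)%E).
have [->|cn0] := eqVneq c 0.
  rewrite mul0e; under eq_integral do rewrite mul0r.
  by rewrite integral0.
have mg : measurable_fun D (fun s => (g s)%:E).
  apply: (eq_measurable_fun (fun s => (c^-1)%:E * \esum_(k in [set: nat]) F k s)%E).
    by move=> s /set_mem Ds; rewrite pw // -EFinM mulrA mulVf // mul1r.
  by apply: measurable_funeM; apply: measurable_esum.
under eq_integral do rewrite EFinM.
rewrite ge0_integralZl_EFin //.
by move=> s _; rewrite lee_fin mulr_ge0 ?expR_ge0.
Qed.
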